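(* The shuffle product $\sqcup\!\sqcup\colon \mathbb{K}\langle\langle X\rangle\rangle\times\mathbb{K}\langle\langle X\rangle\rangle\to\mathbb{K}\langle\langle X\rangle\rangle$ is continuous with respect to the Fréchet topology, and the shuffle product $\sqcup\!\sqcup\colon \mathbb{K}_{LC}\langle\langle X\rangle\rangle\times\mathbb{K}_{LC}\langle\langle X\rangle\rangle\to\mathbb{K}_{LC}\langle\langle X\rangle\rangle$ is continuous with respect to the Silva topology.
   Context: $\mathbb{K}\in\{\mathbb{R},\mathbb{C}\}$. $X=\{x_0,\ldots,x_m\}$ is a finite alphabet, $X^\ast$ its set of words (including the empty word $\emptyset$), $|\eta|$ the length of $\eta$. $\mathbb{K}\langle\langle X\rangle\rangle$ is the space of all maps $c\colon X^\ast\to\mathbb{K}$ (formal power series $c=\sum_\eta(c,\eta)\eta$). The Fréchet topology on $\mathbb{K}\langle\langle X\rangle\rangle$ is the product topology via $\mathbb{K}\langle\langle X\rangle\rangle\cong\prod_{\eta\in X^\ast}\mathbb{K}$ (convergence = coefficientwise convergence). For $M>0$, $\|c\|_{\ell_\infty,M}=\sup_\eta |(c,\eta)|/(M^{|\eta|}|\eta|!)$ and $\ell_{\infty,M}(X^\ast,\mathbb{K})=\{c:\|c\|_{\ell_\infty,M}<\infty\}$ is a Banach space. $\mathbb{K}_{LC}\langle\langle X\rangle\rangle=\bigcup_{M>0}\ell_{\infty,M}(X^\ast,\mathbb{K})$ (the locally convergent series, i.e. those with $|(c,\eta)|\le KM^{|\eta|}|\eta|!$ for some $K,M$), carrying the Silva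 topology, i.e. the locally convex inductive limit topology of the Banach spaces $\ell_{\infty,M}(X^\ast,\mathbb{K})$, $M>0$. The shuffle product is the bilinear product determined on words by $(x_i\eta)\sqcup\!\sqcup(x_j\xi)=x_i(\eta\sqcup\!\sqcup(x_j\xi))+x_j((x_i\eta)\sqcup\!\sqcup\xi)$, $\eta\sqcup\!\sqcup\emptyset=\emptyset\sqcup\!\sqcup\eta=\eta$, extended to series by $(c\sqcup\!\sqcup d,\eta)=\sum_{\nu,\xi}(c,\nu)(d,\xi)(\nu\sqcup\!\sqcup\xi,\eta)$. *)

(* Defs.v *)
(* K ranges over R (an abstract realType) and its complex
   numbers R[i] (mathcomp-real-closed `complex`). *)
From mathcomp Require Import all_boot all_algebra.
From mathcomp Require Export reals complex.
Set Implicit Arguments. Unset Strict Implicit. Unset Printing Implicit Defensive.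
Import GRing.Theory Num.Theory.
Local Open Scope ring_scope.

Section Shuffle.
Variable m : nat.
Definition letter := 'I_m.+1.
Definition word := seq letter.

(* shuffle of two words, as the list of all resulting words with
   multiplicity:  (a u) ш (b v) = a (u ш (b v)) + b ((a u) ш v),
   u ш [::] = [::] ш u = u. *)
Fixpoint shw (u v : word) {struct u} : seq word :=
  match u with
  | [::] => [:: v]
  | a :: u' =>
    let fix shw_r (v : word) : seq word :=
      match v with
      | [::] => [:: u]
      | b :: v' => map (cons a) (shw u' v) ++ map (cons b) (shw_r v')
      end in shw_r v
  end.

Definition shw_coef (u v w : word) : nat := count_mem w (shw u v).

Variable K : numFieldType.

Definition series := word -> K.

(* (c ш d, w) = sum_{nu, xi} (c,nu)(d,xi)(nu ш xi, w).  Only pairs with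
   |nu| + |xi| = |w| can contribute, so the sum is over those (finitely
   many) pairs. *)
Definition shuffle (c d : series) : series := fun w =>
  \sum_(k < (size w).+1)
    \sum_(nu : (k : nat).-tuple letter)
      \sum_(xi : (size w - k).-tuple letter)
        c nu * d xi * (shw_coef nu xi w)%:R.

Definition frechet_open (U : series -> Prop) : Prop :=
  forall c, U c -> exists (F : seq word) (e : K), 0 < e /\
    forall c', (forall w, w \in F -> `|c' w - c w| < e) -> U c'.

Definition ell_ball (M r : K) (c : series) : Prop :=
  forall w, `|c w| <= r * M ^+ size w * (size w)`!%:R.

Definition LC (c : series) : Prop := exists M r, 0 < M /\ ell_ball M r c.

Definition abs_convex (V : series -> Prop) : Prop :=
  forall x y, V x -> V y -> forall a b : K, `|a| + `|b| <= 1 ->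
    V (fun w => a * x w + b * y w).

(* 0-neighbourhoods of the locally convex inductive limit topology:
   absolutely convex subsets of K_LC<<X>> whose trace on every Banach space
   l_{infty,M} is a 0-neighbourhood there. *)
Definition silva_zero_nbhd (V : series -> Prop) : Prop :=
  (forall c, V c -> LC c) /\ abs_convex V /\
  forall M, 0 < M -> exists2 r, 0 < r & forall e, ell_ball M r e -> V e.

Definition silva_open (U : series -> Prop) : Prop :=
  (forall c, U c -> LC c) /\
  forall c, U c -> exists V, silva_zero_nbhd V /\
    forall e, V e -> U (fun w => c w + e w).

End Shuffle.

Definition prod_open (T : Type) (op : (T -> Prop) -> Prop)
    (W : T * T -> Prop) : Prop :=
  forall p, W p -> exists U V, op U /\ op V /\ U p.1 /\ V p.2 /\
    forall x y, U x -> V y -> W (x, y).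

Definition shuffle_frechet_continuous (m : nat) (K : numFieldType) : Prop :=
  forall W : series m K -> Prop, frechet_open W ->
    prod_open (@frechet_open m K) (fun p => W (shuffle p.1 p.2)).

Definition shuffle_silva_continuous (m : nat) (K : numFieldType) : Prop :=
  (forall c d : series m K, LC c -> LC d -> LC (shuffle c d)) /\
  forall W : series m K -> Prop, silva_open W ->
    prod_open (@silva_open m K)
      (fun p => LC p.1 /\ LC p.2 /\ W (shuffle p.1 p.2)).

(* Main.v *)
Require Import Defs.
From mathcomp Require Import all_boot all_algebra reals complex.
From mathcomp Require Import all_order ring lra zify.
From Stdlib Require Import FunctionalExtensionality ClassicalEpsilon.
Set Implicit Arguments. Unset Strict Implicit. Unset Printing Implicit Defensive.
Import Order.TTheory GRing.Theory Num.Theory.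
Local Open Scope ring_scope.

Section Comb.
Variable m : nat.

Lemma shw_nil_l (v : word m) : shw [::] v = [:: v]. Proof. by []. Qed.
Lemma shw_nil_r (u : word m) : shw u [::] = [:: u]. Proof. by case: u. Qed.
Lemma shw_cons (a b : letter m) u v :
  shw (a :: u) (b :: v) = map (cons a) (shw u (b :: v)) ++ map (cons b) (shw (a :: u) v).
Proof. by []. Qed.

Lemma size_shw (u v : word m) : (size (shw u v) <= 2 ^ (size u + size v))%N.
Proof.
elim: u v => [|a u IHu] v; first by rewrite shw_nil_l /= expn_gt0.
elim: v => [|b v IHv]; first by rewrite shw_nil_r /= expn_gt0.
rewrite shw_cons size_cat !size_map.
have := IHu (b :: v). rewrite /=.
move=> h1; move: IHv; rewrite /= => h2.
have -> : ((size u).+1 + (size v).+1 = (size u + (size v).+1).+1)%N by lia.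
rewrite expnS mul2n -addnn; apply: leq_add => //.
by have -> : (size u + (size v).+1 = (size u).+1 + size v)%N by lia.
Qed.

Lemma shw_coef_le (u v w : word m) : (shw_coef u v w <= 2 ^ (size u + size v))%N.
Proof. exact: leq_trans (count_size _ _) (size_shw u v). Qed.

End Comb.


Section Bound.
Variable m : nat.
Variable K : numFieldType.
Local Notation series := (series m K).

Lemma shuffle_bound (a b : series) (al be : nat -> K) (w : word m) :
  (forall u, `|a u| <= al (size u)) -> (forall v, `|b v| <= be (size v)) ->
  `|shuffle a b w| <= \sum_(k < (size w).+1)
      (al k * be (size w - k)%N * ((m.+1 ^ size w * 2 ^ size w)%N)%:R).
Proof.
move=> ha hb; rewrite /shuffle.
apply: le_trans (ler_norm_sum _ _ _) _; apply: ler_sum => k _.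
apply: le_trans (ler_norm_sum _ _ _) _.
apply: (@le_trans _ _ (\sum_(nu : k.-tuple (letter m))
   \sum_(xi : (size w - k).-tuple (letter m)) (al k * be (size w - k)%N * (2 ^ size w)%N%:R))).
  apply: ler_sum => nu _; apply: le_trans (ler_norm_sum _ _ _) _; apply: ler_sum => xi _.
  rewrite !normrM normr_nat.
  have hk : (k + (size w - k) = size w)%N by have := ltn_ord k; lia.
  apply: ler_pM; [by rewrite mulr_ge0|by []| |].
    apply: ler_pM => //; first by have := ha nu; rewrite size_tuple.
    by have := hb xi; rewrite size_tuple.
  rewrite ler_nat; apply: leq_trans (shw_coef_le _ _ _) _.
  by rewrite !size_tuple hk.
rewrite (eq_bigr (fun _ => (al k * be (size w - k)%N * (2 ^ size w)%N%:R) *+ #|{: (size w - k).-tuple (letter m)}|)); last first.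
  by move=> nu _; rewrite sumr_const.
rewrite sumr_const -mulrnA card_tuple card_tuple card_ord -expnD.
have hk : (k + (size w - k) = size w)%N by have := ltn_ord k; lia.
rewrite addnC hk le_eqVlt; apply/orP; left; apply/eqP.
rewrite -mulr_natr natrM; ring.
Qed.

End Bound.


Section Balls.
Variable m : nat.
Variable K : numFieldType.
Local Notation series := (series m K).

Lemma ball_ge0 (M r : K) (c : series) : ell_ball M r c -> 0 <= r.
Proof. by move=> /(_ [::]) /=; rewrite expr0 mulr1 mulr1 => /(le_trans (normr_ge0 _)). Qed.

Lemma ball_mono (M M' r r' : K) (c : series) : 0 <= M -> M <= M' -> r <= r' ->
  ell_ball M r c -> ell_ball M' r' c.
Proof.
move=> M0 MM rr hb w; have r0 := ball_ge0 hb.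
apply: le_trans (hb w) _; apply: ler_pM => //.
- by rewrite mulr_ge0 // exprn_ge0.
- apply: ler_pM => //; first by rewrite exprn_ge0.
  by apply: lerXn2r => //; rewrite nnegrE // (le_trans M0 MM).
Qed.

Lemma ball_lin (M r s a b : K) (x y : series) : ell_ball M r x -> ell_ball M s y ->
  ell_ball M (`|a| * r + `|b| * s) (fun w => a * x w + b * y w).
Proof.
move=> hx hy w; apply: le_trans (ler_normD _ _) _; rewrite !normrM mulrDl mulrDl.
by apply: lerD; rewrite -!mulrA; apply: ler_wpM2l => //; rewrite mulrA.
Qed.

Lemma nat_le_helper (X : K) (p q : nat) : 0 <= X -> (p <= q)%N -> X * p%:R <= X * q%:R.
Proof. by move=> X0 pq; apply: ler_wpM2l => //; rewrite ler_nat. Qed.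

Lemma ball_shuffle (M r s : K) (a b : series) : 0 <= M ->
  ell_ball M r a -> ell_ball M s b ->
  ell_ball ((4 * m.+1)%:R * M) (r * s) (shuffle a b).
Proof.
move=> M0 ha hb w; have r0 := ball_ge0 ha; have s0 := ball_ge0 hb.
set n := size w.
apply: le_trans (shuffle_bound (al := fun k => r * M ^+ k * k`!%:R)
   (be := fun k => s * M ^+ k * k`!%:R) w ha hb) _.
apply: (@le_trans _ _ (\sum_(k < n.+1) (r * s * M ^+ n * (n`! * (m.+1 ^ n * 2 ^ n))%:R))).
  apply: ler_sum => k _.
  have hk : (k <= n)%N by have := ltn_ord k.
  have -> : r * M ^+ k * k`!%:R * (s * M ^+ (n - k)%N * (n - k)`!%:R) *
     (m.+1 ^ n * 2 ^ n)%:R = r * s * M ^+ n * (k`! * (n-k)`! * (m.+1 ^ n * 2 ^ n))%:R.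
    rewrite [in RHS](_ : M ^+ n = M ^+ k * M ^+ (n - k)); last by rewrite -exprD subnKC.
    rewrite !natrM; ring.
  apply: nat_le_helper; first by rewrite !mulr_ge0 // exprn_ge0.
  rewrite leq_mul2r; apply/orP; right.
  rewrite -(bin_fact hk) leq_pmull // bin_gt0 //.
rewrite sumr_const card_ord -[_ *+ n.+1]mulr_natr -mulrA -natrM.
have -> : r * s * ((4 * m.+1)%:R * M) ^+ n * n`!%:R =
   r * s * M ^+ n * ((4 * m.+1) ^ n * n`!)%:R.
  rewrite [in RHS]natrM [in RHS]natrX. rewrite exprMn. rewrite (mulrC ((4 * m.+1)%:R ^+ n)). rewrite !mulrA. done.
apply: nat_le_helper; first by rewrite !mulr_ge0 // exprn_ge0.
have h2 : (n.+1 <= 2 ^ n)%N by rewrite ltn_expl.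
have -> : ((4 * m.+1) ^ n = m.+1 ^ n * 2 ^ n * 2 ^ n)%N by rewrite -mulnA -expnMn expnMn mulnC.
rewrite [X in (_ <= X)%N](_ : _ = n`! * (m.+1 ^ n * 2 ^ n) * 2 ^ n)%N; last by ring.
by rewrite leq_mul2l h2 orbT.
Qed.

Lemma LC_shuffle (a b : series) : LC a -> LC b -> LC (shuffle a b).
Proof.
move=> [Ma [ra [Ma0 ha]]] [Mb [rb [Mb0 hb]]].
have hM : 0 <= Ma + Mb by rewrite addr_ge0 // ltW.
exists ((4 * m.+1)%:R * (Ma + Mb)), (ra * rb); split.
  by rewrite mulr_gt0 ?ltr0n // addr_gt0.
apply: ball_shuffle => //.
  by apply: ball_mono ha => //; [exact: ltW | rewrite lerDl ltW].
by apply: ball_mono hb => //; [exact: ltW | rewrite lerDr ltW].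
Qed.

Lemma LC_lin (a b : K) (x y : series) : LC x -> LC y -> LC (fun w => a * x w + b * y w).
Proof.
move=> [Mx [rx [Mx0 hx]]] [My [ry [My0 hy]]].
exists (Mx + My), (`|a| * rx + `|b| * ry); split; first by rewrite addr_gt0.
apply: ball_lin.
  by apply: ball_mono hx => //; [exact: ltW | rewrite lerDl ltW].
by apply: ball_mono hy => //; [exact: ltW | rewrite lerDr ltW].
Qed.

End Balls.


Section Frechet.
Variable m : nat.
Variable K : numFieldType.
Local Notation series := (series m K).
Local Notation word := (word m).

Lemma pos_min (a b : K) : 0 < a -> 0 < b -> exists2 d, 0 < d & d <= a /\ d <= b.
Proof.
move=> a0 b0; case/orP: (real_leVge (gtr0_real a0) (gtr0_real b0)) => h.
  by exists a.
by exists b.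
Qed.

Variable P : word -> Prop.
Definition close (dl : K) (x c : series) := forall w, P w -> `|x w - c w| < dl.

Lemma close_mono (d1 d2 : K) x c : d1 <= d2 -> close d1 x c -> close d2 x c.
Proof. by move=> h hc w Pw; apply: lt_le_trans (hc w Pw) h. Qed.

Variables c d : series.
Definition Cont (G : series -> series -> K) := forall e, 0 < e ->
  exists2 dl, 0 < dl & forall x y, close dl x c -> close dl y d -> `|G x y - G c d| < e.

Lemma Cont_sum (I : Type) (r : seq I) (Q : pred I) (F : I -> series -> series -> K) :
  (forall i, Cont (F i)) -> Cont (fun x y => \sum_(i <- r | Q i) F i x y).
Proof.
move=> hF; elim: r => [|i r IH] e e0.
  by exists 1 => // x y _ _; rewrite !big_nil subrr normr0.
have e20 : 0 < e / 2 by rewrite divr_gt0.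
have [d1 d10 h1] := IH _ e20.
have [d2 d20 h2] := hF i _ e20.
have [dl dl0 [dl1 dl2]] := pos_min d10 d20.
exists dl => // x y hx hy; rewrite !big_cons.
have hx1 := close_mono dl1 hx; have hy1 := close_mono dl1 hy.
have hx2 := close_mono dl2 hx; have hy2 := close_mono dl2 hy.
case: (Q i).
  have -> : F i x y + \sum_(j <- r | Q j) F j x y - (F i c d + \sum_(j <- r | Q j) F j c d)
    = (F i x y - F i c d) + (\sum_(j <- r | Q j) F j x y - \sum_(j <- r | Q j) F j c d) by ring.
  apply: le_lt_trans (ler_normD _ _) _; rewrite [e]splitr.
  by apply: ltrD; [exact: h2|exact: h1].
by apply: lt_trans (h1 _ _ hx1 hy1) _; rewrite gtr_pMr // invf_lt1 // ltr1n.
Qed.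

Lemma Cont_term (u v : word) (k : K) : P u -> P v -> Cont (fun x y => x u * y v * k).
Proof.
move=> Pu Pv e e0.
set A := `|c u| + `|d v| + 1; set Q := `|k| + 1.
have A0 : 0 < A by rewrite ltr_wpDl // addr_ge0.
have Q0 : 0 < Q by rewrite ltr_wpDl.
have [dl dl0 [dl1 dl2]] := pos_min (ltr01 : (0 : K) < 1) (divr_gt0 e0 (mulr_gt0 A0 Q0)).
exists dl => // x y hx hy.
have hxu := hx u Pu; have hyv := hy v Pv.
have hyb : `|y v| <= `|d v| + 1.
  have -> : y v = (y v - d v) + d v by ring.
  by apply: le_trans (ler_normD _ _) _; rewrite addrC lerD2l (le_trans (ltW hyv)).
have -> : x u * y v * k - c u * d v * k = ((x u - c u) * y v + c u * (y v - d v)) * k by ring.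
rewrite normrM.
apply: (@le_lt_trans _ _ (dl * A * `|k|)).
  apply: ler_wpM2r => //; apply: le_trans (ler_normD _ _) _; rewrite !normrM.
  apply: (@le_trans _ _ (dl * (`|d v| + 1) + `|c u| * dl)).
    apply: lerD; first by apply: ler_pM => //; exact: ltW.
    by apply: ler_wpM2l => //; exact: ltW.
  by rewrite le_eqVlt; apply/orP; left; apply/eqP; rewrite /A; ring.
apply: (@lt_le_trans _ _ (dl * A * Q)).
  by rewrite ltr_pM2l ?mulr_gt0 // /Q ltrDl.
rewrite -mulrA; apply: le_trans (ler_wpM2r (ltW (mulr_gt0 A0 Q0)) dl2) _.
by rewrite divfK // gt_eqF // mulr_gt0.
Qed.

End Frechet.


Section Frechet2.
Variable m : nat.
Variable K : numFieldType.
Local Notation series := (series m K).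
Local Notation word := (word m).

Fixpoint wl (L : nat) : seq word :=
  if L is L'.+1 then [::] :: [seq a :: w | a <- enum 'I_m.+1, w <- wl L'] else [:: [::]].

Lemma mem_wl L (w : word) : (size w <= L)%N -> w \in wl L.
Proof.
elim: L w => [|L IH] [|a w] //= hw.
rewrite in_cons; apply/orP; right.
by apply: (allpairs_f (fun a w => a :: w)); [rewrite mem_enum | exact: IH].
Qed.

Lemma Cont_shuffle L (c d : series) w : (size w <= L)%N ->
  Cont (fun u : word => (size u <= L)%N) c d (fun x y => shuffle x y w).
Proof.
move=> hw; rewrite /shuffle.
apply: Cont_sum => k; apply: Cont_sum => nu; apply: Cont_sum => xi.
apply: Cont_term; rewrite size_tuple; apply: leq_trans hw.
  by have := ltn_ord k; rewrite ltnS.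
exact: leq_subr.
Qed.

Lemma Cont_list (Pw : word -> Prop) (c d : series) (F : seq word) e : 0 < e ->
  (forall w, w \in F -> Cont Pw c d (fun x y => shuffle x y w)) ->
  exists2 dl, 0 < dl & forall x y, close Pw dl x c -> close Pw dl y d ->
     forall w, w \in F -> `|shuffle x y w - shuffle c d w| < e.
Proof.
move=> e0; elim: F => [|w F IH] hF.
  by exists 1 => // x y _ _ w; rewrite in_nil.
have [d1 d10 h1] := IH (fun w' hw' => hF w' (mem_behead (s := w :: F) hw')).
have [d2 d20 h2] := hF w (mem_head _ _) e e0.
have [dl dl0 [dl1 dl2]] := pos_min d10 d20.
exists dl => // x y hx hy w'; rewrite in_cons => /orP [/eqP -> | hw'].
  by apply: h2; [exact: close_mono dl2 hx | exact: close_mono dl2 hy].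
by apply: h1 => //; [exact: close_mono dl1 hx | exact: close_mono dl1 hy].
Qed.

Definition FInt (S : series -> Prop) (x : series) : Prop :=
  exists (F : seq word) (e : K), 0 < e /\
    forall x', (forall w, w \in F -> `|x' w - x w| < e) -> S x'.

Lemma FInt_sub S x : FInt S x -> S x.
Proof. by move=> [F [e [e0 h]]]; apply: h => w _; rewrite subrr normr0. Qed.

Lemma FInt_open S : frechet_open (FInt S).
Proof.
move=> x [F [e [e0 h]]]; have e20 : 0 < e / 2 by rewrite divr_gt0.
exists F, (e / 2); split => // x' hx'; exists F, (e / 2); split => // x'' hx''.
apply: h => w hw; apply: le_lt_trans (ler_distD (x' w) _ _) _.
by rewrite [e]splitr; apply: ltrD; [exact: hx''|exact: hx'].
Qed.

Lemma sumn_size (F : seq word) w : w \in F -> (size w <= sumn (map size F))%N.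
Proof.
elim: F => [|v F IH] //=; rewrite in_cons => /orP [/eqP -> | h].
  exact: leq_addr.
by apply: leq_trans (IH h) _; exact: leq_addl.
Qed.

Theorem frechet_cont : shuffle_frechet_continuous m K.
Proof.
move=> W hW [c d] /= Wcd.
have [F [e [e0 hF]]] := hW _ Wcd.
set L := sumn (map size F).
have [dl dl0 hdl] := Cont_list (Pw := fun u : word => (size u <= L)%N) (c := c) (d := d) e0
  (fun w hw => Cont_shuffle c d (sumn_size hw)).
exists (FInt (fun x => close (fun u : word => (size u <= L)%N) dl x c)).
exists (FInt (fun x => close (fun u : word => (size u <= L)%N) dl x d)).
split; first exact: FInt_open.
split; first exact: FInt_open.
split.
  by exists (wl L), dl; split => // x' hx' w hw; apply: hx'; exact: mem_wl.
split.
  by exists (wl L), dl; split => // x' hx' w hw; apply: hx'; exact: mem_wl.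
move=> x y /FInt_sub hx /FInt_sub hy; apply: hF => w hw.
exact: hdl.
Qed.

End Frechet2.


Section ZN.
Variable m : nat.
Variable K : numFieldType.
Local Notation series := (series m K).
Local Notation word := (word m).

Lemma feq (f g : series) : (forall w, f w = g w) -> f = g.
Proof. exact: functional_extensionality. Qed.

Lemma shuffle_lin_l (a b : K) (x y d : series) :
  shuffle (fun w => a * x w + b * y w) d = fun w => a * shuffle x d w + b * shuffle y d w.
Proof.
apply: feq => w; rewrite /shuffle !mulr_sumr -big_split; apply: eq_bigr => k _.
rewrite !mulr_sumr -big_split; apply: eq_bigr => nu _.
rewrite !mulr_sumr -big_split; apply: eq_bigr => xi _ /=; ring.
Qed.

Lemma shuffle_lin_r (a b : K) (x y c : series) :
  shuffle c (fun w => a * x w + b * y w) = fun w => a * shuffle c x w + b * shuffle c y w.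
Proof.
apply: feq => w; rewrite /shuffle !mulr_sumr -big_split; apply: eq_bigr => k _.
rewrite !mulr_sumr -big_split; apply: eq_bigr => nu _.
rewrite !mulr_sumr -big_split; apply: eq_bigr => xi _ /=; ring.
Qed.

Lemma shuffle_expand (x y c d : series) w :
  shuffle x y w - shuffle c d w =
  shuffle c (fun u => y u - d u) w + shuffle (fun u => x u - c u) d w
  + shuffle (fun u => x u - c u) (fun u => y u - d u) w.
Proof.
rewrite /shuffle -!sumrB -!big_split; apply: eq_bigr => k _.
rewrite -!sumrB -!big_split; apply: eq_bigr => nu _.
rewrite -!sumrB -!big_split; apply: eq_bigr => xi _ /=; ring.
Qed.

Lemma zn_0 (V : series -> Prop) : silva_zero_nbhd V -> V (fun _ => 0).
Proof.
move=> [_ [_ hb]]; have [r r0 h] := hb 1 ltr01; apply: h => w.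
by rewrite normr0 expr1n mulr1 mulr_ge0 // ltW.
Qed.

Lemma zn_scale (V : series -> Prop) (a : K) x : silva_zero_nbhd V -> `|a| <= 1 -> V x ->
  V (fun w => a * x w).
Proof.
move=> [_ [hc _]] ha hx.
have := hc x x hx hx a 0; rewrite normr0 addr0 => /(_ ha).
by congr V; apply: feq => w; rewrite mul0r addr0.
Qed.

Lemma zn_mid (V : series -> Prop) x y : silva_zero_nbhd V -> V x -> V y ->
  V (fun w => 2^-1 * x w + 2^-1 * y w).
Proof.
move=> [_ [hc _]] hx hy; apply: hc => //.
by rewrite ger0_norm ?invr_ge0 ?ler0n // [X in _ <= X](splitr 1) mul1r.
Qed.

Definition Sc (t : K) (V : series -> Prop) : series -> Prop := fun v => V (fun w => t * v w).

Lemma zn_Sc (t : K) V : 0 < t -> silva_zero_nbhd V -> silva_zero_nbhd (Sc t V).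
Proof.
move=> t0 hV; have [hL [hc hb]] := hV.
split; [|split].
- move=> v /hL hv; have := LC_lin t^-1 0 hv hv.
  by congr LC; apply: feq => w; rewrite mul0r addr0 mulrA mulVf ?mul1r // gt_eqF.
- move=> x y hx hy a b hab; rewrite /Sc.
  have := hc _ _ hx hy a b hab; congr V; apply: feq => w; ring.
- move=> M M0; have [r r0 h] := hb M M0; exists (r / t); first by rewrite divr_gt0.
  move=> e he; apply: h; have := ball_lin t 0 he he.
  rewrite normr0 mul0r addr0 gtr0_norm // mulrC divfK ?gt_eqF //.
  by move=> hb' w; have := hb' w; rewrite mul0r addr0.
Qed.

Lemma zn_I (V1 V2 : series -> Prop) : silva_zero_nbhd V1 -> silva_zero_nbhd V2 ->
  silva_zero_nbhd (fun v => V1 v /\ V2 v).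
Proof.
move=> [hL1 [hc1 hb1]] [hL2 [hc2 hb2]]; split; [|split].
- by move=> v [/hL1].
- by move=> x y [? ?] [? ?] a b hab; split; [apply: hc1|apply: hc2].
- move=> M M0; have [r1 r10 h1] := hb1 M M0; have [r2 r20 h2] := hb2 M M0.
  have [r r0 [rr1 rr2]] := pos_min r10 r20; exists r => // e he; split.
    by apply: h1; apply: ball_mono he => //; exact: ltW.
  by apply: h2; apply: ball_mono he => //; exact: ltW.
Qed.

Lemma zn_sep (V : series -> Prop) (g : series -> series) : silva_zero_nbhd V ->
  (forall a b x y, g (fun w => a * x w + b * y w) = fun w => a * g x w + b * g y w) ->
  (forall M, 0 < M -> exists M', 0 < M' /\ exists2 k, 0 <= k &
       forall r e, ell_ball M r e -> ell_ball M' (r * k) (g e)) ->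
  silva_zero_nbhd (fun v => LC v /\ V (g v)).
Proof.
move=> [hL [hc hb]] glin gb; split; [|split].
- by move=> v [].
- move=> x y [Lx Vx] [Ly Vy] a b hab; split; first exact: LC_lin.
  by rewrite glin; apply: hc.
- move=> M M0; have [M' [M'0 [k k0 hk]]] := gb M M0.
  have [r r0 h] := hb M' M'0.
  have k10 : 0 < k + 1 by rewrite ltr_wpDl.
  exists (r / (k + 1)); first by rewrite divr_gt0.
  move=> e he; split; first by exists M, (r / (k + 1)).
  apply: h; apply: ball_mono (hk _ _ he) => //; first exact: ltW.
  rewrite mulrAC ler_pdivrMr //; apply: ler_wpM2l; [exact: ltW | by rewrite lerDl].
Qed.

Definition SInt (S : series -> Prop) (x : series) : Prop :=
  exists Z, silva_zero_nbhd Z /\ forall z, Z z -> S (fun w => x w + z w).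

Lemma SInt_sub S x : SInt S x -> S x.
Proof.
move=> [Z [hZ h]]; have := h _ (zn_0 hZ).
by congr S; apply: feq => w; rewrite addr0.
Qed.

Lemma SInt_open S : (forall x, S x -> LC x) -> silva_open (SInt S).
Proof.
move=> hS; split; first by move=> x /SInt_sub /hS.
move=> x [Z [hZ h]]; have h20 : (0 : K) < 2 by rewrite ltr0n.
exists (Sc 2 Z); split; first exact: zn_Sc.
move=> z hz; exists (Sc 2 Z); split; first exact: zn_Sc.
move=> z' hz'; have := h _ (zn_mid hZ hz hz').
congr S; apply: feq => w /=.
by rewrite !mulrA mulVf ?mul1r ?addrA // pnatr_eq0.
Qed.

End ZN.


Section Rho.
Variable m : nat.
Variable K : numFieldType.
Local Notation series := (series m K).

Definition mn (x y : K) := x * y / (x + y).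
Lemma mn_gt0 x y : 0 < x -> 0 < y -> 0 < mn x y.
Proof. by move=> x0 y0; rewrite /mn divr_gt0 ?mulr_gt0 ?addr_gt0. Qed.
Lemma mn_le1 x y : 0 < x -> 0 < y -> mn x y <= x.
Proof.
move=> x0 y0; rewrite /mn ler_pdivrMr ?addr_gt0 //.
by apply: ler_wpM2l; [exact: ltW | rewrite lerDr ltW].
Qed.
Lemma mn_le2 x y : 0 < x -> 0 < y -> mn x y <= y.
Proof.
move=> x0 y0; rewrite /mn ler_pdivrMr ?addr_gt0 // mulrC.
by apply: ler_wpM2l; [exact: ltW | rewrite lerDl ltW].
Qed.

Fixpoint rh (r : nat -> K) (N : nat) : K :=
  if N is N'.+1 then mn (rh r N') (r N) else mn 1 (r 0%N).

Lemma rho_exists (V : series -> Prop) : silva_zero_nbhd V ->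
  exists rho : nat -> K, [/\ (forall N, 0 < rho N), (forall N, rho N <= 1),
    (forall i j, (i <= j)%N -> rho j <= rho i) &
    (forall N e, ell_ball (N.+1)%:R (rho N) e -> V e)].
Proof.
move=> [_ [_ hb]].
have H : forall N : nat, exists r : K, 0 < r /\ (forall e, ell_ball (N.+1)%:R r e -> V e).
  by move=> N; have [r r0 h] := hb (N.+1)%:R (ltr0Sn _ _); exists r.
pose r N := proj1_sig (constructive_indefinite_description _ (H N)).
have hr N : 0 < r N /\ (forall e, ell_ball (N.+1)%:R (r N) e -> V e).
  exact: (proj2_sig (constructive_indefinite_description _ (H N))).
have pos N : 0 < rh r N.
  elim: N => [|N IH] /=; first by apply: mn_gt0 => //; case: (hr 0%N).
  by apply: mn_gt0 => //; case: (hr N.+1).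
have le_r N : rh r N <= r N.
  case: N => [|N] /=; first by apply: mn_le2 => //; case: (hr 0%N).
  by apply: mn_le2 => //; case: (hr N.+1).
have dec1 N : rh r N.+1 <= rh r N by apply: mn_le1 => //; case: (hr N.+1).
exists (rh r); split => //.
- elim => [|N IH] /=; first by apply: mn_le1 => //; case: (hr 0%N).
  exact: le_trans (dec1 N) IH.
- move=> i j; elim: j => [|j IH]; first by rewrite leqn0 => /eqP ->.
  rewrite leq_eqVlt => /orP [/eqP -> //| ]; rewrite ltnS => hij.
  exact: le_trans (dec1 j) (IH hij).
- move=> N e he; apply: (proj2 (hr N)); apply: ball_mono he => //.
Qed.

Lemma argmax (f : nat -> K) n : (forall i, 0 <= f i) ->
  exists J, (J <= n)%N /\ forall i, (i <= n)%N -> f i <= f J.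
Proof.
move=> f0; elim: n => [|n [J [hJ h]]].
  by exists 0%N; split => // i; rewrite leqn0 => /eqP ->.
case/orP: (real_leVge (ger0_real (f0 J)) (ger0_real (f0 n.+1))) => hc.
  exists n.+1; split => // i; rewrite leq_eqVlt => /orP [/eqP -> //|].
  by rewrite ltnS => /h /le_trans; apply.
exists J; split; first exact: leqW.
by move=> i; rewrite leq_eqVlt => /orP [/eqP -> //|]; rewrite ltnS => /h.
Qed.

End Rho.


Section Absorb.
Variable m : nat.
Variable K : numFieldType.
Local Notation series := (series m K).
Hypothesis archi : forall x : K, 0 < x -> exists n : nat, x <= n%:R.
Variable V : series -> Prop.
Hypothesis hV : silva_zero_nbhd V.
Variable rho : nat -> K.
Hypothesis rho_pos : forall N, 0 < rho N.
Hypothesis rho_ball : forall N e, ell_ball (N.+1)%:R (rho N) e -> V e.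

Lemma half2 j (x : K) : 2^-1 * (2 ^+ j.+2 * x) = 2 ^+ j.+1 * x.
Proof.
by rewrite [2 ^+ j.+2]exprS -mulrA mulKf // pnatr_eq0.
Qed.

Lemma eqle (x y : K) : x = y -> x <= y. Proof. by move->. Qed.

Lemma natle2X (L : nat) : L%:R <= (2 : K) ^+ L.
Proof. by rewrite -natrX ler_nat ltnW // ltn_expl. Qed.

Lemma absorb (e : series) : LC e ->
  (forall n, exists N, forall w, size w = n ->
     2 ^+ n.+2 * `|e w| <= rho N * (N.+1)%:R ^+ n * n`!%:R) -> V e.
Proof.
move=> [M [R [M0 hR]]] hn.
have R0 := ball_ge0 hR.
have [Ns hNs] := archi (mulr_gt0 (ltr0n K 4) M0).
set rs := rho Ns.
have rs0 : 0 < rs := rho_pos Ns.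
have [L hL] := archi (divr_gt0 (ltr_wpDl (mulr_ge0 (ler0n _ 2) R0) (ltr01 : (0:K) < 1)) rs0).
have hL' : 2 * R <= 2 ^+ L * rs.
  rewrite ler_pdivrMr // in hL.
  apply: le_trans (le_trans _ hL) _; first by rewrite lerDl.
  by apply: ler_wpM2r; [exact: ltW | exact: natle2X].
pose tl j : series := fun w => if (j <= size w)%N then e w else 0.
pose g j : series := fun w => 2 ^+ j.+1 * tl j w.
have base : V (g L).
  apply: (rho_ball (N := Ns)) => w; rewrite /g /tl; case: ifP => hw; last first.
    by rewrite mulr0 normr0 !mulr_ge0 ?exprn_ge0 // ltW.
  rewrite normrM ger0_norm ?exprn_ge0 //.
  apply: le_trans (ler_wpM2l (exprn_ge0 _ (ler0n _ 2)) (hR w)) _.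
  rewrite !mulrA; apply: ler_wpM2r => //.
  set n := size w.
  apply: (@le_trans _ _ ((2 ^+ L * (2 * R)) * M ^+ n)).
    by apply: eqle; rewrite exprSr; ring.
  apply: (@le_trans _ _ ((2 ^+ L * (2 ^+ L * rs)) * M ^+ n)).
    apply: ler_wpM2r; first by rewrite exprn_ge0 // ltW.
    by apply: ler_wpM2l => //; rewrite exprn_ge0.
  apply: (@le_trans _ _ ((4 ^+ n * rs) * M ^+ n)).
    apply: ler_wpM2r; first by rewrite exprn_ge0 // ltW.
    rewrite mulrA -exprMn; apply: ler_wpM2r; first exact: ltW.
    rewrite (_ : (2 * 2 : K) = 4); last by rewrite -natrM.
    by apply: ler_weXn2l => //; rewrite ler1n.
  apply: (@le_trans _ _ (rs * (4 * M) ^+ n)); first by apply: eqle; rewrite exprMn; ring.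
  apply: ler_wpM2l; first exact: ltW.
  apply: lerXn2r; rewrite ?nnegrE ?mulr_ge0 ?ltW ?ler0n //.
  by apply: le_lt_trans hNs _; rewrite ltr_nat.
have step j : (j < L)%N -> V (g j.+1) -> V (g j).
  move=> hj hg; have [N hN] := hn j.
  have hp : V (fun w => 2 ^+ j.+2 * (if size w == j then e w else 0)).
    apply: (rho_ball (N := N)) => w; case: eqP => hw.
      by rewrite normrM ger0_norm ?exprn_ge0 // hw; exact: hN.
    by rewrite mulr0 normr0 !mulr_ge0 ?exprn_ge0 // ltW.
  have := zn_mid hV hp hg; congr V; apply: feq => w; rewrite /g /tl.
  case: (ltngtP (size w) j) => h /=; rewrite ?mulr0 ?addr0 ?add0r ?half2 //.
have all d : (d <= L)%N -> V (g (L - d)%N).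
  elim: d => [|d IH] hd; first by rewrite subn0.
  apply: step; first by lia.
  have -> : ((L - d.+1).+1 = L - d)%N by lia.
  by apply: IH; lia.
have g0 := all L (leqnn L); rewrite subnn in g0.
have := zn_mid hV g0 (zn_0 hV); congr V; apply: feq => w.
by rewrite /g /tl /= mulr0 addr0 expr1 mulrA mulVf ?mul1r // pnatr_eq0.
Qed.

End Absorb.


Section AA.
Variable m : nat.
Variable K : numFieldType.
Local Notation series := (series m K).
Hypothesis archi : forall x : K, 0 < x -> exists n : nat, x <= n%:R.
Variable V : series -> Prop.
Hypothesis hV : silva_zero_nbhd V.
Variable rho : nat -> K.
Hypothesis rho_pos : forall N, 0 < rho N.
Hypothesis rho_le1 : forall N, rho N <= 1.
Hypothesis rho_dec : forall i j, (i <= j)%N -> rho j <= rho i.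
Hypothesis rho_ball : forall N e, ell_ball (N.+1)%:R (rho N) e -> V e.

Definition cc := (32 * m.+1)%N.
Definition sg (i : nat) := rho (cc * i.+1).-1.
Definition phi (n : nat) := \sum_(i < n.+1) sg i * (i.+1)%:R ^+ n.
Definition AA (a : series) := LC a /\ forall w, 4 * `|a w| <= (size w)`!%:R * phi (size w).

Lemma cc_gt0 i : (0 < cc * i.+1)%N. Proof. by rewrite muln_gt0 /cc muln_gt0. Qed.
Lemma sig_pos i : 0 < sg i. Proof. exact: rho_pos. Qed.
Lemma sig_le1 i : sg i <= 1. Proof. exact: rho_le1. Qed.
Lemma sig_dec i j : (i <= j)%N -> sg j <= sg i.
Proof.
move=> hij; apply: rho_dec; rewrite -!subn1 leq_sub2r //.
by rewrite leq_mul2l ltnS hij orbT.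
Qed.
Lemma sig_ball i e : ell_ball (cc * i.+1)%:R (sg i) e -> V e.
Proof. by move=> h; apply: (rho_ball (N := (cc * i.+1).-1)); rewrite prednK // cc_gt0. Qed.

Lemma phi_ge i n : (i <= n)%N -> sg i * (i.+1)%:R ^+ n <= phi n.
Proof.
move=> hi; have hi' : (i < n.+1)%N by [].
rewrite /phi (bigD1 (Ordinal hi')) //= lerDl sumr_ge0 // => j _.
by rewrite mulr_ge0 ?exprn_ge0 // ltW // sig_pos.
Qed.

Lemma phi_ge0 n : 0 <= phi n.
Proof. by apply: le_trans (phi_ge (leq0n n)); rewrite mulr_ge0 ?exprn_ge0 // ltW // sig_pos. Qed.

Lemma zn_AA : silva_zero_nbhd AA.
Proof.
split; [|split].
- by move=> a [].
- move=> x y [Lx hx] [Ly hy] a b hab; split; first exact: LC_lin.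
  move=> w; set P := (size w)`!%:R * phi (size w).
  have P0 : 0 <= P by rewrite mulr_ge0 // phi_ge0.
  apply: (@le_trans _ _ (`|a| * (4 * `|x w|) + `|b| * (4 * `|y w|))).
    apply: (@le_trans _ _ (4 * (`|a * x w| + `|b * y w|))).
      by apply: ler_wpM2l => //; exact: ler_normD.
    by apply: eqle; rewrite !normrM; ring.
  apply: (@le_trans _ _ ((`|a| + `|b|) * P)).
    by rewrite [X in _ <= X]mulrDl; apply: lerD; apply: ler_wpM2l.
  by rewrite -[X in _ <= X]mul1r; apply: ler_wpM2r.
- move=> M M0; have [n0 hn0] := archi M0.
  have M10 : 0 < M + 1 by rewrite addr_gt0.
  have D0 : 0 < 4 * (M + 1) ^+ n0.+1 by rewrite mulr_gt0 // exprn_gt0.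
  exists (sg n0 / (4 * (M + 1) ^+ n0.+1)); first by rewrite divr_gt0 // sig_pos.
  move=> e he; split; first by exists M, (sg n0 / (4 * (M + 1) ^+ n0.+1)); split.
  move=> w; set n := size w.
  apply: le_trans (ler_wpM2l (ler0n _ 4) (he w)) _.
  set X := M ^+ n / (M + 1) ^+ n0.+1.
  have -> : 4 * (sg n0 / (4 * (M + 1) ^+ n0.+1) * M ^+ n * n`!%:R)
      = n`!%:R * (sg n0 * X).
    rewrite /X invfM; field. by rewrite gt_eqF // exprn_gt0.
  apply: ler_wpM2l => //.
  have Mp : 1 <= M + 1 by rewrite lerDr ltW.
  have hP : 1 <= (M + 1) ^+ n0.+1 by rewrite exprn_ege1.
  case: (leqP n0 n) => hn.
    apply: le_trans (phi_ge hn); apply: ler_wpM2l; first exact: ltW (sig_pos _).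
    apply: (@le_trans _ _ (M ^+ n)).
      rewrite /X ler_pdivrMr ?exprn_gt0 //.
      rewrite -[X in X <= _]mulr1; apply: ler_wpM2l => //.
      by rewrite exprn_ge0 // ltW.
    apply: lerXn2r; [by rewrite nnegrE ltW | by rewrite nnegrE ler0n |].
    by apply: le_trans hn0 _; rewrite ler_nat.
  apply: le_trans (phi_ge (leq0n n)); rewrite expr1n mulr1.
  apply: (@le_trans _ _ (sg n0)); last exact: sig_dec.
  rewrite -[X in _ <= X]mulr1; apply: ler_wpM2l; first exact: ltW (sig_pos _).
  rewrite /X ler_pdivrMr ?exprn_gt0 // mul1r.
  apply: (@le_trans _ _ ((M + 1) ^+ n)).
    apply: lerXn2r; [by rewrite nnegrE ltW | by rewrite nnegrE ltW |].
    by rewrite lerDl.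
  by apply: ler_weXn2l => //; apply: ltnW; apply: leq_trans hn _.
Qed.


Lemma phi_prod k n J : (k <= n)%N -> (J <= n)%N ->
  (forall i, (i <= n)%N -> sg i * (i.+1)%:R ^+ n <= sg J * (J.+1)%:R ^+ n) ->
  phi k * phi (n - k) <= (n.+1 ^ 2)%:R * (sg J * (J.+1)%:R ^+ n).
Proof.
move=> hk hJ hmax; set T := sg J * (J.+1)%:R ^+ n.
have T0 : 0 <= T by rewrite mulr_ge0 ?exprn_ge0 // ltW // sig_pos.
rewrite /phi mulr_suml.
apply: (@le_trans _ _ (\sum_(i < k.+1) \sum_(j < (n - k).+1) T)).
  apply: ler_sum => i _; rewrite mulr_sumr; apply: ler_sum => j _.
  have hi : (i <= k)%N by have := ltn_ord i.
  have hj : (j <= n - k)%N by have := ltn_ord j.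
  set M' := maxn i j.
  have hM' : (M' <= n)%N by rewrite geq_max; apply/andP; split; lia.
  apply: le_trans (hmax _ hM').
  have -> : sg i * (i.+1)%:R ^+ k * (sg j * (j.+1)%:R ^+ (n - k)) =
     (sg i * sg j) * ((i.+1)%:R ^+ k * (j.+1)%:R ^+ (n - k)) by ring.
  apply: ler_pM.
  - by rewrite mulr_ge0 // ltW // sig_pos.
  - by rewrite mulr_ge0 // exprn_ge0.
  - rewrite /M'; case: (leqP i j) => hij.
      rewrite -[X in _ <= X]mul1r; apply: ler_wpM2r.
        exact: ltW (sig_pos _).
      exact: sig_le1.
    rewrite -[X in _ <= X]mulr1; apply: ler_wpM2l.
      exact: ltW (sig_pos _).
    exact: sig_le1.
  - rewrite -[in X in _ <= X](subnKC hk) exprD; apply: ler_pM; rewrite ?exprn_ge0 //.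
      apply: lerXn2r; rewrite ?nnegrE ?ler0n // ler_nat ltnS; exact: leq_maxl.
    apply: lerXn2r; rewrite ?nnegrE ?ler0n // ler_nat ltnS; exact: leq_maxr.
rewrite (eq_bigr (fun _ => T *+ (n - k).+1)); last by move=> i _; rewrite sumr_const card_ord.
rewrite sumr_const card_ord -mulrnA -[_ *+ _]mulr_natr mulrC; apply: ler_wpM2r => //.
rewrite ler_nat mulnC; apply: leq_mul; rewrite ltnS //; exact: leq_subr.
Qed.


Lemma AA_bound (a : series) : AA a -> forall u, `|a u| <= (size u)`!%:R * phi (size u) / 4.
Proof.
by move=> [_ h] u; rewrite ler_pdivlMr ?ltr0n // mulrC.
Qed.

Lemma nat_final n : (2 ^ n.+2 * n.+1 ^ 2 * (m.+1 ^ n * 2 ^ n) * n.+1 <= cc ^ n * 4 * 4)%N.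
Proof.
have h : (n.+1 <= 2 ^ n)%N by rewrite ltn_expl.
apply: (@leq_trans (2 ^ n.+2 * (2 ^ n) ^ 2 * (m.+1 ^ n * 2 ^ n) * 2 ^ n)).
  apply: leq_mul => //; apply: leq_mul => //; apply: leq_mul => //.
  by rewrite leq_exp2r.
rewrite /cc expnMn.
have -> : (32 ^ n = 2 ^ n * 2 ^ n * 2 ^ n * 2 ^ n * 2 ^ n)%N by rewrite -!expnMn.
rewrite !expnS expn0 muln1.
set t := (2 ^ n)%N; set u := (m.+1 ^ n)%N.
rewrite [X in (X <= _)%N](_ : _ = 4 * (t * t * t * t * t * u))%N; last by ring.
rewrite [X in (_ <= X)%N](_ : _ = 16 * (t * t * t * t * t * u))%N; last by ring.
by rewrite leq_mul2r orbT.
Qed.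

Lemma AA_prod (a b : series) : AA a -> AA b -> V (shuffle a b).
Proof.
move=> ha hb; apply: (absorb archi hV rho_pos rho_ball).
  exact: LC_shuffle (proj1 ha) (proj1 hb).
move=> n.
have [J [hJ hmax]] := argmax (f := fun i => sg i * (i.+1)%:R ^+ n) n
  (fun i => mulr_ge0 (ltW (sig_pos i)) (exprn_ge0 _ (ler0n _ _))).
exists (cc * J.+1).-1 => w hw.
rewrite prednK ?cc_gt0 //.
set T := sg J * (J.+1)%:R ^+ n.
have T0 : 0 <= T by rewrite mulr_ge0 ?exprn_ge0 // ltW // sig_pos.
set C := (m.+1 ^ n * 2 ^ n)%N.
have hs := shuffle_bound (al := fun k => k`!%:R * phi k / 4) (be := fun k => k`!%:R * phi k / 4)
   w (AA_bound ha) (AA_bound hb).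
rewrite hw in hs.
have hsum : \sum_(k < n.+1) ((fun k => k`!%:R * phi k / 4) k * (fun k => k`!%:R * phi k / 4) (n - k)%N
     * (m.+1 ^ n * 2 ^ n)%N%:R) <=
   \sum_(k < n.+1) (n`!%:R * ((n.+1 ^ 2)%:R * T) * C%:R * (4^-1 * 4^-1)).
  apply: ler_sum => k _ /=.
  have hk : (k <= n)%N by have := ltn_ord k.
  have -> : k`!%:R * phi k / 4 * ((n - k)`!%:R * phi (n - k) / 4) * C%:R
     = (k`!%:R * (n - k)`!%:R) * (phi k * phi (n - k)) * C%:R * (4^-1 * 4^-1) by ring.
  apply: ler_wpM2r; first by rewrite mulr_ge0 // invr_ge0 ler0n.
  apply: ler_wpM2r; first exact: ler0n.
  apply: ler_pM; rewrite ?mulr_ge0 ?phi_ge0 //.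
    by rewrite -natrM ler_nat -(bin_fact hk) leq_pmull // bin_gt0.
  exact: phi_prod.
have hst := le_trans hs hsum.
rewrite sumr_const card_ord in hst.
apply: le_trans (ler_wpM2l (exprn_ge0 _ (ler0n _ 2)) hst) _.
set X := n`!%:R * ((n.+1 ^ 2)%:R * T) * C%:R * (4^-1 * 4^-1).
have -> : 2 ^+ n.+2 * (X *+ n.+1) = (T * n`!%:R) *
     ((2 ^ n.+2 * n.+1 ^ 2 * C * n.+1)%N%:R * (4^-1 * 4^-1)).
  have E : (2 ^ n.+2 * n.+1 ^ 2 * C * n.+1)%N%:R =
     (2 : K) ^+ n.+2 * (n.+1 ^ 2)%:R * C%:R * n.+1%:R by rewrite -natrX -!natrM.
  rewrite E /X -[_ *+ n.+1]mulr_natr; ring.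
have -> : sg J * (cc * J.+1)%:R ^+ n * n`!%:R = (T * n`!%:R) * (cc ^ n)%N%:R.
  rewrite /T natrM exprMn natrX; ring.
apply: ler_wpM2l; first by rewrite mulr_ge0.
rewrite mulrA ler_pdivrMr ?ltr0n // ler_pdivrMr ?ltr0n //.
by rewrite -!natrM ler_nat; exact: nat_final.
Qed.

End AA.


Section Silva.
Variable m : nat.
Variable K : numFieldType.
Local Notation series := (series m K).
Hypothesis archi : forall x : K, 0 < x -> exists n : nat, x <= n%:R.

Lemma sep_bound_l (d : series) : LC d -> forall M, 0 < M -> exists M', 0 < M' /\
  exists2 k, 0 <= k & forall r e, ell_ball M r e -> ell_ball M' (r * k) (shuffle e d).
Proof.
move=> [Md [Rd [Md0 hd]]] M M0.
exists ((4 * m.+1)%:R * (M + Md)); split; first by rewrite mulr_gt0 ?ltr0n // addr_gt0.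
exists Rd; first exact: ball_ge0 hd.
move=> r e he; apply: ball_shuffle; first by rewrite addr_ge0 // ltW.
  by apply: ball_mono he => //; [exact: ltW | rewrite lerDl ltW].
by apply: ball_mono hd => //; [exact: ltW | rewrite lerDr ltW].
Qed.

Lemma sep_bound_r (c : series) : LC c -> forall M, 0 < M -> exists M', 0 < M' /\
  exists2 k, 0 <= k & forall r e, ell_ball M r e -> ell_ball M' (r * k) (shuffle c e).
Proof.
move=> [Mc [Rc [Mc0 hc]]] M M0.
exists ((4 * m.+1)%:R * (M + Mc)); split; first by rewrite mulr_gt0 ?ltr0n // addr_gt0.
exists Rc; first exact: ball_ge0 hc.
move=> r e he; rewrite (mulrC r Rc); apply: ball_shuffle; first by rewrite addr_ge0 // ltW.
  by apply: ball_mono hc => //; [exact: ltW | rewrite lerDr ltW].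
by apply: ball_mono he => //; [exact: ltW | rewrite lerDl ltW].
Qed.

Lemma LC_add (x z : series) : LC x -> LC z -> LC (fun w => x w + z w).
Proof.
move=> hx hz; have := LC_lin 1 1 hx hz.
by congr LC; apply: feq => w; rewrite !mul1r.
Qed.

Theorem silva_cont : shuffle_silva_continuous m K.
Proof.
split; first by move=> c d; exact: LC_shuffle.
move=> W [WL hW] [c d] /= [Lc [Ld Wcd]].
have [V0 [hV0 hV0W]] := hW _ Wcd.
have h40 : (0:K) < 4 by rewrite ltr0n.
have hV1 := zn_Sc h40 hV0.
set V1 := Sc 4 V0 in hV1.
have [rho [rp rl rd rb]] := rho_exists hV1.
have hA0 := zn_AA m archi rp rd.
set A0 := AA rho in hA0.
have hAs := zn_I hA0 (zn_sep (g := fun a => shuffle a d) hV1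
   (fun a b x y => shuffle_lin_l a b x y d) (sep_bound_l Ld)).
have hBs := zn_I hA0 (zn_sep (g := fun b => shuffle c b) hV1
   (fun a b x y => shuffle_lin_r a b x y c) (sep_bound_r Lc)).
set As := (fun v => A0 v /\ LC v /\ V1 (shuffle v d)) in hAs.
set Bs := (fun v => A0 v /\ LC v /\ V1 (shuffle c v)) in hBs.
have hAL : forall z, As z -> LC z by case: hAs.
have hBL : forall z, Bs z -> LC z by case: hBs.
exists (SInt (fun x => LC x /\ As (fun w => x w - c w))).
exists (SInt (fun y => LC y /\ Bs (fun w => y w - d w))).
split; first by apply: SInt_open => x [].
split; first by apply: SInt_open => x [].
split.
  exists As; split => // z hz; split; first exact: LC_add Lc (hAL _ hz).
  by congr As: hz; apply: feq => w; ring.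
split.
  exists Bs; split => // z hz; split; first exact: LC_add Ld (hBL _ hz).
  by congr Bs: hz; apply: feq => w; ring.
move=> x y /SInt_sub [Lx hAx] /SInt_sub [Ly hBy].
rewrite /As in hAx; rewrite /Bs in hBy.
have [hA [_ had]] := hAx; have [hB [_ hcb]] := hBy.
split => //; split => //.
have hab := AA_prod archi hV1 rp rl rb hA hB.
have hE := zn_mid hV0 (zn_mid hV0 hcb (zn_0 hV0)) (zn_mid hV0 had hab).
have := hV0W _ hE; congr W; apply: feq => w /=.
have E := shuffle_expand x y c d w.
rewrite -[shuffle x y w](subrK (shuffle c d w)) E.
by field; rewrite ?pnatr_eq0.
Qed.

End Silva.

Lemma archR {R : realType} {x : R} : 0 < x -> exists n : nat, x <= n%:R.
Proof. move=> x0; exists (Num.Def.archi_bound x); exact: ltW (archi_boundP (ltW x0)). Qed.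
Lemma archC (R : realType) (x : R[i]) : 0 < x -> exists n : nat, x <= n%:R.
Proof.
move=> x0. rewrite ltcE /= in x0. case/andP: x0 => /eqP hi hr.
have [n hn] := archR hr; exists n.
have -> : (n%:R : R[i]) = real_complex R (n%:R : R).
  by elim: n {hn} => [|n IH]; [rewrite rmorph0 | rewrite mulrS IH [in RHS]mulrS rmorphD rmorph1].
rewrite lecE /= -hi eqxx /=. done.
Qed.


Theorem theorem3p4 (R : realType) (m : nat) :
  (shuffle_frechet_continuous m R /\ shuffle_silva_continuous m R) /\
  (shuffle_frechet_continuous m R[i] /\ shuffle_silva_continuous m R[i]).
Proof.
split; split.
- exact: frechet_cont.
- by apply: silva_cont => x x0; exact: archR.
- exact: frechet_cont.
- by apply: silva_cont => x x0; exact: archC.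
Qed.
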